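(* Let $\Gamma$ be a finite vertex-transitive graph with $\mathrm{diam}(\Gamma)\in\{1,2\}$. Then $\Gamma$ admits no extended irregular dominating set.
   Context: Let $\Gamma=(V,E)$ be a finite simple undirected graph with graph distance $d$; $\mathrm{diam}(\Gamma)$ is the largest distance between two vertices. A vertex $v$ carrying a non-negative integer label $\ell$ dominates (covers) exactly the vertices $u$ with $d(u,v)=\ell$; a vertex labeled $0$ dominates only itself. An extended irregular dominating set is a set $S\subseteq V$ together with a labeling $\lambda:S\to\mathbb{Z}_{\ge 0}$ with distinct labels on distinct vertices, such that every vertex of $V$ is dominated by at least one vertex of $S$; it is assumed that some vertex of $S$ has label $0$. *)

(* Defs.v *)
From mathcomp Require Import all_boot all_order all_fingroup.
Set Implicit Arguments. Unset Strict Implicit. Unset Printing Implicit Defensive.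

Definition simple_graph (T : finType) (e : rel T) : Prop :=
  symmetric e /\ irreflexive e.

Fixpoint nstep (T : finType) (e : rel T) (k : nat) (u v : T) : bool :=
  match k with
  | 0 => u == v
  | k'.+1 => [exists w, e u w && nstep e k' w v]
  end.

Definition is_dist (T : finType) (e : rel T) (u v : T) (l : nat) : Prop :=
  nstep e l u v /\ (forall k, k < l -> ~~ nstep e k u v).

Definition diam_eq (T : finType) (e : rel T) (D : nat) : Prop :=
  (forall u v : T, exists2 l, l <= D & is_dist e u v l) /\
  (exists u v : T, is_dist e u v D).

Definition graph_automorphism (T : finType) (e : rel T) (f : {perm T}) : Prop :=
  forall x y, e (f x) (f y) = e x y.

Definition vertex_transitive (T : finType) (e : rel T) : Prop :=
  forall u v : T, exists f : {perm T}, graph_automorphism e f /\ f u = v.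

(* extended irregular dominating set: S with labeling lam (values outside S
   irrelevant), distinct labels on distinct vertices of S, every vertex
   dominated, and some vertex of S labeled 0. *)
Definition ext_irr_dom (T : finType) (e : rel T) (S : {set T}) (lam : T -> nat)
  : Prop :=
  {in S &, injective lam} /\
  (forall u : T, exists2 v, v \in S & is_dist e u v (lam v)) /\
  (exists2 v, v \in S & lam v = 0).

(* Main.v *)
Require Import Defs.
From mathcomp Require Import all_boot all_order all_fingroup.
Set Implicit Arguments. Unset Strict Implicit.

Lemma nstepSr (T : finType) (e : rel T) k u v :
  nstep e k.+1 u v = [exists w, nstep e k u w && e w v].
Proof.
elim: k u v => [|k IH] u v.
  apply/existsP/existsP => [[w /andP[euw /eqP <-]]|[w /andP[/eqP <- ewv]]].
    by exists u; rewrite /= eqxx.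
  by exists v; rewrite /= ewv eqxx.
apply/existsP/existsP => [[w /andP[euw nwv]]|[w /andP[nuw ewv]]].
  have := (nwv : nstep e k.+1 w v); rewrite IH => /existsP[x /andP[nwx exv]].
  exists x; rewrite exv andbT; apply/existsP; exists w; by rewrite euw.
have := (nuw : nstep e k.+1 u w); move=> /existsP[x /andP[eux nxw]].
exists x; apply/andP; split => //.
have h : nstep e k.+1 x v by rewrite IH; apply/existsP; exists w; apply/andP; split.
exact: h.
Qed.

Lemma nstep_sym (T : finType) (e : rel T) : symmetric e ->
  forall k u v, nstep e k u v = nstep e k v u.
Proof.
move=> se; elim=> [|k IH] u v; first by rewrite /= eq_sym.
rewrite nstepSr; apply/existsP/existsP => [[w /andP[a b]]|[w /andP[a b]]];
  exists w; apply/andP; split.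
- by rewrite se.
- by move: a; rewrite IH.
- by move: b; rewrite IH.
- by rewrite se.
Qed.

Lemma dist_uniq (T : finType) (e : rel T) u v l1 l2 :
  is_dist e u v l1 -> is_dist e u v l2 -> l1 = l2.
Proof.
move=> [n1 m1] [n2 m2]; case: (ltngtP l1 l2) => // h.
  by move: (m2 _ h); rewrite n1.
by move: (m1 _ h); rewrite n2.
Qed.

Lemma dist_symP (T : finType) (e : rel T) : symmetric e ->
  forall u v l, is_dist e u v l -> is_dist e v u l.
Proof.
move=> se u v l [n m]; split; first by rewrite nstep_sym.
by move=> k hk; rewrite nstep_sym //; apply: m.
Qed.

Lemma dist0 (T : finType) (e : rel T) u v : is_dist e u v 0 -> u = v.
Proof. by move=> [/= /eqP]. Qed.

Lemma distuu (T : finType) (e : rel T) u l : is_dist e u u l -> l = 0.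
Proof.
move=> h; have h0 : is_dist e u u 0 by split => //=; rewrite eqxx.
exact: (dist_uniq h h0).
Qed.

Unset Implicit Arguments. Set Strict Implicit.

Theorem proposition3p1 (T : finType) (e : rel T) :
  simple_graph e -> vertex_transitive e ->
  (diam_eq e 1 \/ diam_eq e 2) ->
  ~ (exists (S : {set T}) (lam : T -> nat), ext_irr_dom e S lam).
Proof.
move=> [se _] _ hD [S [lam [inj [cov [v0 v0S l0]]]]].
have [bnd [a [b hab]]] : (forall u v l, is_dist e u v l -> l <= 2) /\
    exists a b : T, a <> b.
  case: hD => [[h1 [a [b hab]]]|[h1 [a [b hab]]]]; split.
  - move=> u v l d; have [l' hl' d'] := h1 u v; rewrite (dist_uniq d d').
    exact: leq_trans hl' _.
  - exists a, b => eab; rewrite eab in hab; by move: (distuu hab).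
  - move=> u v l d; have [l' hl' d'] := h1 u v; by rewrite (dist_uniq d d').
  - exists a, b => eab; rewrite eab in hab; by move: (distuu hab).
have z0 : forall v, v \in S -> lam v = 0 -> v = v0.
  by move=> v vS lv; apply: inj => //; rewrite lv l0.
have no2 : forall y, y \in S -> lam y = 2 ->
    (forall x, x \in S -> lam x = 1 -> ~ is_dist e y x 1) -> False.
  move=> y yS ly hx; have [w wS dw] := cov y.
  have := bnd _ _ _ dw; case Ew: (lam w) => [|[|[|m]]] // _; rewrite Ew in dw.
  - by have := z0 w wS Ew; rewrite -(dist0 dw) => h; rewrite h l0 in ly.
  - exact: (hx w wS Ew dw).
  - have yw : y = w by apply: inj => //; rewrite ly Ew.
    by rewrite -yw in dw; move: (distuu dw).
have [c cS lc] : exists2 c, c \in S & (lam c == 1) || (lam c == 2).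
  wlog na : a b hab / a != v0.
    move=> W; case: (eqVneq a v0) => [ea|]; last exact: W hab.
    apply: (W b a) => //; first by move=> h; apply: hab.
    by rewrite -ea; apply/eqP => h; apply: hab.
  have [w wS dw] := cov a; exists w => //.
  have := bnd _ _ _ dw; case Ew: (lam w) => [|[|[|m]]] // _.
  by rewrite Ew in dw; have := z0 w wS Ew; rewrite -(dist0 dw) => h; by rewrite h eqxx in na.
case/orP: lc => /eqP lc.
- have [w wS dw] := cov c.
  have := bnd _ _ _ dw; case Ew: (lam w) => [|[|[|m]]] // _; rewrite Ew in dw.
  + by have := z0 w wS Ew; rewrite -(dist0 dw) => h; rewrite h l0 in lc.
  + have cw : c = w by apply: inj => //; rewrite lc Ew.
    by rewrite -cw in dw; move: (distuu dw).
  + apply: (no2 w wS Ew) => x xS lx dx.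
    have xc : x = c by apply: inj => //; rewrite lx lc.
    rewrite xc in dx; move: (dist_uniq (dist_symP se dw) dx) => //.
- apply: (no2 c cS lc) => x xS lx dx.
  have [w wS dw] := cov x.
  have := bnd _ _ _ dw; case Ew: (lam w) => [|[|[|m]]] // _; rewrite Ew in dw.
  + by have := z0 w wS Ew; rewrite -(dist0 dw) => h; rewrite h l0 in lx.
  + have xw : x = w by apply: inj => //; rewrite lx Ew.
    by rewrite -xw in dw; move: (distuu dw).
  + have wc : w = c by apply: inj => //; rewrite lc Ew.
    rewrite wc in dw; move: (dist_uniq (dist_symP se dw) dx) => //.
Qed.
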